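(* Let $X$ be a continuous real-valued random variable with compact support, and fix an integer $k \ge 1$. For each $n > k$, let $Z = Z_n$ be the random variable produced by the SMOTE-$k$ procedure (described in the context) from an i.i.d. sample $X_1, \dots, X_n$ drawn from $X$. Then $Z$ converges to $X$ in mean as $n \to \infty$.
   Context: SMOTE-$k$ procedure: given a sample $X_1,\dots,X_n$ of real numbers and a neighbor rank $1 \le k \le n-1$: (1) choose an index $i$ uniformly at random from $\{1,\dots,n\}$; (2) let $X_{i,(k)}$ be the $k$-th nearest neighbor of $X_i$ among the other sample points $\{X_j : j \neq i\}$, i.e. the point realizing the $k$-th smallest of the distances $|X_j - X_i|$, $j \ne i$; (3) draw $\lambda \sim U(0,1)$ independently; (4) output $Z = X_i + \lambda (X_{i,(k)} - X_i)$. The random variable $X$ appearing in the conclusion is taken to be the sample point $X_i$ from which $Z$ is generated (which has the distribution of $X$), so convergence in mean means $E[|Z - X_i|] \to 0$. *)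

(* Defs.v *)
From HB Require Import structures.
From mathcomp Require Import all_boot all_order all_algebra.
From mathcomp Require Import all_classical all_reals all_analysis.
Set Implicit Arguments. Unset Strict Implicit. Unset Printing Implicit Defensive.
Import Order.TTheory GRing.Theory Num.Theory.
Import numFieldNormedType.Exports.
Local Open Scope classical_set_scope.
Local Open Scope ring_scope.

Definition measure_support (R : realType) (mu : set R -> \bar R) : set R :=
  [set x | forall e : R, 0 < e -> (0 < mu (ball x e))%E].

(* Sample x_0, ..., x_{n-1} is encoded as the first n values of x : nat -> R. *)
(* Index j of the k-th nearest neighbour of x_i among {x_j : j <> i}:
   indices j <> i sorted (stably, so ties broken by index) by |x_j - x_i|,
   then the k-th one (k >= 1). *)
Definition kth_nn_index (R : realType) (n : nat) (x : 'I_n -> R) (i : 'I_n)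
  (k : nat) : 'I_n :=
  nth i (sort (fun j j' : 'I_n => `|x j - x i| <= `|x j' - x i|)
              [seq j <- enum 'I_n | j != i]) k.-1.

Definition kth_nn (R : realType) (n : nat) (x : 'I_n -> R) (i : 'I_n) (k : nat) : R :=
  x (kth_nn_index x i k).

Definition smote (R : realType) (n : nat) (x : 'I_n -> R) (i : 'I_n) (k : nat)
  (lam : R) : R :=
  x i + lam * (kth_nn x i k - x i).

Definition scons (R : Type) (y : R) (x : nat -> R) : nat -> R :=
  fun j => if j is j'.+1 then x j' else y.

(* Expectation of f(X_0,...,X_{n-1}) for X_0,...,X_{n-1} i.i.d. with law mu,
   i.e. integral against the n-fold product measure mu^{(x)n}, written as an
   iterated integral (f only depends on the first n coordinates). *)
Fixpoint iid_expect (R : realType) (mu : set R -> \bar R) (n : nat)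
  (f : (nat -> R) -> \bar R) : \bar R :=
  match n with
  | 0 => f (fun _ => 0)
  | m.+1 => (\int[mu]_y iid_expect mu m (fun x => f (scons y x)))%E
  end.

(* E |Z_n - X_I| where the sample is i.i.d. mu, I uniform on {0..n-1},
   lam ~ U(0,1) (Lebesgue measure on [0,1]), all independent. *)
Definition smote_mean_error (R : realType) (mu : set R -> \bar R) (k n : nat)
  : \bar R :=
  iid_expect mu n (fun x =>
    ((n%:R)^-1)%:E *
    \sum_(i < n) \int[lebesgue_measure]_(lam in `[0%R, 1%R])
       (`| smote (fun j : 'I_n => x j) i k lam - x i | )%:E)%E.

(* Main.v *)
Require Import Defs.
From HB Require Import structures.
From mathcomp Require Import all_boot all_order all_algebra.
From mathcomp Require Import all_classical all_reals all_analysis.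
From mathcomp Require Import zify ring lra.
Import Order.TTheory GRing.Theory Num.Theory.
Import numFieldNormedType.Exports.
Local Open Scope classical_set_scope.
Local Open Scope ring_scope.
Lemma kth_nn_le (R : realType) n (x : 'I_n -> R) (i : 'I_n) k (r : R) :
  (0 < k)%N -> (k <= #|[set j | ((j != i) && (`|x j - x i| <= r))%R]%SET|)%N ->
  `|kth_nn x i k - x i| <= r.
Proof.
move=> k0 hk.
pose leT := (fun j j' : 'I_n => `|x j - x i| <= `|x j' - x i|).
pose s := sort leT [seq j <- enum 'I_n | j != i].
have tot : total leT by move=> u v; exact: le_total.
have tr : transitive leT by move=> u v w; exact: le_trans.
have rf : reflexive leT by move=> u; exact: lexx.
have ss : sorted leT s by exact: sort_sorted.
have -> : kth_nn x i k = x (nth i s k.-1) by [].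
rewrite leNgt; apply/negP => hlt.
have Hdrop : forall y, y \in drop k.-1 s -> r < `|x y - x i|.
  move=> y yin.
  have im : (index y (drop k.-1 s) < size (drop k.-1 s))%N by rewrite index_mem.
  have := nth_index i yin; rewrite nth_drop => <-.
  apply: (lt_le_trans hlt).
  apply: (sorted_leq_nth tr rf i ss); rewrite ?inE ?leq_addr //.
    by move: im; rewrite size_drop; lia.
  by move: im; rewrite size_drop; lia.
have hc : count (fun j => (j != i) && (`|x j - x i| <= r)) (enum 'I_n) =
          count (fun j => `|x j - x i| <= r) s.
  rewrite /s count_sort !count_filter; apply: eq_count => j /=; rewrite /predI /= !inE /=.
  by case: (j != i); case: (_ <= r).
have : (count (fun j => (`|x j - x i| <= r)%R) s <= k.-1)%N.
  rewrite -[s](cat_take_drop k.-1) count_cat.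
  have -> : count (fun j => `|x j - x i| <= r) (drop k.-1 s) = 0%N.
    apply/eqP; rewrite -leqn0 leqNgt -has_count; apply/hasPn => y /Hdrop.
    by rewrite ltNge.
  suff: (count (fun j => (`|x j - x i| <= r)%R) (take k.-1 s) <= k.-1)%N by lia.
  apply: leq_trans (count_size _ _) _.
  by rewrite size_take; case: ifP => //; lia.
rewrite -hc.
have : #|[set j | ((j != i) && (`|x j - x i| <= r))%R]%SET| =
   count (fun j => ((j != i) && (`|x j - x i| <= r))%R) (enum 'I_n).
  rewrite cardE /enum_mem size_filter !count_filter; apply: eq_count => j.
  by rewrite !inE andbT.
lia.
Qed.

Lemma count_sparse n m k (beta : 'I_n -> 'I_m) :
  (#|[pred i | ~~ (k < #|[set j | beta j == beta i]%SET|)%N]| <= k * m)%N.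
Proof.
rewrite -sum1_card (partition_big beta xpredT) //=.
rewrite mulnC -[X in (_ <= X * _)%N]card_ord -sum_nat_const.
apply: leq_sum => t _.
case: (pickP [pred i | ~~ (k < #|[set j | beta j == beta i]%SET|)%N && (beta i == t)]) => [i0 /andP [H0 /eqP E0]| H0]; last first.
  by rewrite big_pred0.
apply: (@leq_trans (\sum_(i | beta i == beta i0) 1)%N); last first.
  rewrite sum1_card (_ : #|_| = #|[set j | beta j == beta i0]%SET|); first by rewrite leqNgt.
  by apply: eq_card => j; rewrite inE.
rewrite big_mkcond [X in (_ <= X)%N]big_mkcond /=; apply: leq_sum => i _.
by case: ifP => // /andP [_ /eqP ->]; rewrite E0 eqxx.
Qed.

Lemma det_bound (R : realType) n (x : 'I_n -> R) k (a b : R) m :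
  (0 < k)%N -> a < b -> (forall j, a <= x j <= b) ->
  \sum_(i < n) `|kth_nn x i k - x i| <=
    n%:R * ((b - a) / m.+1%:R) + (k * m.+1)%:R * (b - a).
Proof.
move=> k0 ab hx.
set w := (b - a) / m.+1%:R.
have m0 : 0 < m.+1%:R :> R by rewrite ltr0n.
have w0 : 0 < w by rewrite divr_gt0 // subr_gt0.
pose u j := (x j - a) / w.
have u0 j : 0 <= u j.
  by rewrite /u divr_ge0 // ?subr_ge0 ?(ltW w0) //; case/andP: (hx j).
have um j : u j <= m.+1%:R.
  rewrite /u ler_pdivrMr // /w mulrCA mulfV ?mulr1; last by rewrite gt_eqF.
  by case/andP: (hx j) => _ hb; lra.
have xu j : x j = a + w * u j.
  by rewrite /u mulrCA mulfV ?mulr1 ?gt_eqF //; ring.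
have bl j : (minn (Num.truncn (u j)) m < m.+1)%N by rewrite ltnS geq_minr.
pose beta j : 'I_m.+1 := Ordinal (bl j).
have hb j : ((beta j)%:R <= u j) && (u j <= (beta j)%:R + 1).
  rewrite /beta /=; apply/andP; split.
    apply: le_trans (_ : (Num.truncn (u j))%:R <= u j).
      by rewrite ler_nat geq_minl.
    by rewrite truncn_le.
  case: (leqP (Num.truncn (u j)) m) => hm.
    by apply: ltW; rewrite natr1; exact: truncnS_gt.
  by rewrite natr1; exact: um.
have close i j : beta j = beta i -> `|x j - x i| <= w.
  move=> e; rewrite !xu (_ : a + w * u j - (a + w * u i) = w * (u j - u i)); last by ring.
  rewrite normrM (gtr0_norm w0) ler_piMr ?(ltW w0) //.
  have := hb i; have := hb j; rewrite e.
  move=> /andP [h1 h2] /andP [h3 h4].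
  rewrite ler_norml; apply/andP; split; lra.
pose dense i := (k < #|[set j | beta j == beta i]%SET|)%N.
have hi i : `|kth_nn x i k - x i| <= w + (if dense i then 0 else b - a).
  case: ifP => hd.
    rewrite addr0; apply: kth_nn_le => //.
    apply: (@leq_trans #|[set j | beta j == beta i]%SET :\ i|).
      move: hd; rewrite /dense (cardsD1 i) inE eqxx /=; lia.
    apply: subset_leq_card; apply/fintype.subsetP => j; rewrite !inE => /andP [ji /eqP bj].
    by rewrite ji /=; apply: close.
  have := hx (kth_nn_index x i k); have := hx i.
  rewrite /kth_nn => /andP [h1 h2] /andP [h3 h4].
  apply: le_trans (_ : b - a <= _); last by rewrite lerDr ltW.
  by rewrite ler_norml; apply/andP; split; lra.
apply: le_trans (ler_sum _ (fun i _ => hi i)) _.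
rewrite big_split /= sumr_const card_ord -[w *+ n]mulr_natl lerD2l.
rewrite (eq_bigr (fun i => if ~~ dense i then b - a else 0)); last by move=> i _; case: (dense i).
rewrite -big_mkcond /= sumr_const -[(b - a) *+ _]mulr_natl.
rewrite ler_wpM2r; last by rewrite ler_nat; have := @count_sparse n m.+1 k beta; congr (_ <= _)%N; apply: eq_card.
by []. by rewrite subr_ge0 ltW.
Qed.
Local Open Scope ereal_scope.

Lemma support_bounded (R : realType) (S : set R) :
  compact S -> exists M : R, forall x, S x -> (`|x| <= M)%R.
Proof.
move=> /compact_bounded [M0 [_ HM]].
exists (M0 + 1)%R => x Sx.
by apply: (HM (M0 + 1)%R) => //; rewrite ltrDl.
Qed.

Lemma negl_compl_support (R : realType) (mu : probability R R) :
  mu.-negligible (~` measure_support mu).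
Proof.
pose B (p : nat) : set R :=
  match (unpickle p : option (rat * rat)) with
  | Some qr => if mu (ball ((ratr qr.1 : R)) ((ratr qr.2 : R))) == 0 then ball ((ratr qr.1 : R)) ((ratr qr.2 : R)) else set0
  | None => set0
  end.
have mball (c r : R) : measurable (ball c r).
  by rewrite ball_itv; exact: measurable_itv.
apply: (@negligibleS _ _ _ _ (\bigcup_p B p)).
  move=> x /= nS.
  have [e [e0 he]] : exists e : R, (0 < e)%R /\ mu (ball x e) = 0.
    apply: contrapT => H; apply: nS => e e0.
    rewrite lt0e measure_ge0 andbT; apply/negP => /eqP h; apply: H; by exists e.
  have h1 : (x - e / 4 < x + e / 4)%R by lra.
  have h2 : (e / 4 < e / 2)%R by lra.
  have [q hq] := rat_in_itvoo h1.
  have [r hr] := rat_in_itvoo h2.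
  move: hq hr; rewrite !in_itv /= => /andP [q1 q2] /andP [r1 r2].
  have sub : ball (ratr q : R) (ratr r : R) `<=` ball x e.
    move=> y; rewrite -!ball_normE /= => hy.
    have : (`|x - y| <= `|x - ratr q| + `|ratr q - y|)%R.
      by rewrite (_ : (x - y = (x - ratr q) + (ratr q - y))%R) ?ler_normD //; ring.
    have : (`|x - ratr q| < e / 4)%R.
      by rewrite ltr_norml; apply/andP; split; lra.
    lra.
  have h0 : mu (ball (ratr q : R) (ratr r : R)) = 0.
    apply/eqP; rewrite eq_le measure_ge0 andbT -he; apply: le_measure => //; rewrite inE //.
  exists (pickle (q, r)); first exact: I.
  rewrite /B pickleK.
  rewrite /= h0 eqxx -ball_normE /=.
  by rewrite distrC ltr_norml; apply/andP; split; lra.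
apply: negligible_bigcup => p; rewrite /B.
case: (unpickle p) => [qr|]; last exact: negligible_set0.
case: ifP => [/eqP h|_]; last exact: negligible_set0.
by exists (ball ((ratr qr.1 : R)) ((ratr qr.2 : R))); split.
Qed.



Lemma le_integral_any d (T : measurableType d) (R : realType)
  (mu : {measure set T -> \bar R}) (D : set T) (f g : T -> \bar R) :
  (forall x, D x -> 0 <= f x) -> (forall x, D x -> f x <= g x) ->
  \int[mu]_(x in D) f x <= \int[mu]_(x in D) g x.
Proof.
move=> f0 fg.
have g0 : forall x, D x -> 0 <= g x by move=> x Dx; exact: le_trans (f0 _ Dx) (fg _ Dx).
rewrite !ge0_integralE//.
apply: le_ereal_sup => _ [h /= hf <-]; exists h => //= x.
apply: le_trans (hf x) _; rewrite /patch; case: ifP => // /set_mem Dx; exact: fg.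
Qed.

Section iid.
Variables (R : realType) (mu : probability R R).

Lemma iid_ge0 n (f : (nat -> R) -> \bar R) :
  (forall x, 0 <= f x) -> 0 <= iid_expect mu n f.
Proof.
elim: n f => [|n IH] f f0 /=; first exact: f0.
by apply: integral_ge0 => y _; apply: IH.
Qed.

Lemma iid_mono n (f g : (nat -> R) -> \bar R) :
  (forall x, 0 <= f x) -> (forall x, f x <= g x) ->
  iid_expect mu n f <= iid_expect mu n g.
Proof.
elim: n f g => [|n IH] f g f0 fg /=; first exact: fg.
apply: le_integral_any => y _; first exact: iid_ge0.
exact: IH.
Qed.

Lemma iid_csty n : iid_expect mu n (fun _ => +oo) = +oo.
Proof.
elim: n => [|n IH] //=.
rewrite IH (integral_cst mu measurableT +oo). have h : (0 < mu setT)%E by rewrite probability_setT. exact: gt0_mulye h.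
Qed.

Variables (a b : R).
Hypothesis hab : mu (~` [set x | (a <= x <= b)%R]) = 0%E.

Definition boxf (n : nat) (c : R) (x : nat -> R) : \bar R :=
  if [forall j : 'I_n, (a <= x j <= b)%R] then c%:E else +oo.

Lemma boxf_scons n c y x :
  boxf n.+1 c (scons y x) = if (a <= y <= b)%R then boxf n c x else +oo.
Proof.
rewrite /boxf; case: ifP => [/forallP H|].
  have := H ord0; rewrite /= => ->.
  case: ifP => // /forallP; case=> j; exact: (H (lift ord0 j)).
move=> /negP H; case: ifP => // Hy; case: ifP => // /forallP Hx.
exfalso; apply: H; apply/forallP => j.
case: j => [[|j] Hj] //= ; exact: (Hx (Ordinal (Hj : (j < n)%N))).
Qed.

Lemma mS : measurable [set x : R | (a <= x <= b)%R].
Proof.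
have -> : [set x : R | (a <= x <= b)%R] = `[a, b]%classic.
  by apply/seteqP; split => x /=; rewrite in_itv.
exact: measurable_itv.
Qed.

Lemma iid_box n c : iid_expect mu n (boxf n c) = c%:E.
Proof.
elim: n c => [|n IH] c /=; first by rewrite /boxf; case: ifP => //; move/forallP; case; case.
transitivity (\int[mu]_(y in setT) (fun y => if (a <= y <= b)%R then c%:E else +oo) y).
  apply: eq_integral => y _ /=.
  rewrite (_ : (fun x => boxf n.+1 c (scons y x)) =
     (fun x => if (a <= y <= b)%R then boxf n c x else +oo)); last first.
    by apply/funext => x; rewrite boxf_scons.
  by case: ifP => _; rewrite ?IH ?iid_csty.
rewrite (ae_eq_integral (cst c%:E)) //.
- rewrite (integral_cst mu measurableT); have h : mu setT = 1 by exact: probability_setT.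
  by move: h => /= ->; rewrite mule1.
- apply: measurable_fun_if => //.
    apply: measurable_and.
      exact: measurable_realfun.measurable_fun_ler.
    exact: measurable_realfun.measurable_fun_ler.
- exists (~` [set x | (a <= x <= b)%R]); split; [exact: measurableC mS| |].
    by move: hab.
  by move=> y /= H Hy; apply: H => _; rewrite Hy.
Qed.

End iid.


Lemma int01 (R : realType) (p q : R) :
  \int[lebesgue_measure]_(lam in `[0%R, 1%R]) (`| p + lam * (q - p) - p |)%:E
  <= (`| q - p |)%:E.
Proof.
apply: le_trans (@le_integral_any _ _ _ _ _ _ (cst (`|q - p|)%:E) _ _) _.
- by move=> ? _; rewrite lee_fin normr_ge0.
- move=> l; rewrite /= in_itv /= => /andP [l0 l1].
  rewrite lee_fin addrAC subrr add0r normrM ler_piMl ?normr_ge0 //.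
  by rewrite ger0_norm.
rewrite integral_cst //= lebesgue_measure_itv /= lte_fin ltr01 -EFinB subr0 mule1.
by [].
Qed.

Section main.
Variables (R : realType) (mu : probability R R) (k : nat) (a b : R).
Hypothesis k0 : (0 < k)%N.
Hypothesis ab : (a < b)%R.
Hypothesis hab : mu (~` [set x | (a <= x <= b)%R]) = 0%E.

Lemma F_ge0 n (x : nat -> R) :
  0 <= ((n%:R)^-1)%:E *
    \sum_(i < n) \int[lebesgue_measure]_(lam in `[0%R, 1%R])
       (`| smote (fun j : 'I_n => x j) i k lam - x i | )%:E.
Proof.
apply: mule_ge0; first by rewrite lee_fin invr_ge0 ler0n.
by apply: sume_ge0 => i _; apply: integral_ge0 => l _; rewrite lee_fin normr_ge0.
Qed.

Lemma smote_bound n m : (0 < n)%N ->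
  smote_mean_error mu k n <=
   (((n%:R)^-1) * (n%:R * ((b - a) / m.+1%:R) + (k * m.+1)%:R * (b - a)))%:E.
Proof.
move=> n0; rewrite /smote_mean_error.
set c := (((n%:R)^-1) * (n%:R * ((b - a) / m.+1%:R) + (k * m.+1)%:R * (b - a)))%R.
have := @iid_mono _ mu n _ (boxf _ a b n c) (fun x => F_ge0 n x).
move=> H; apply: le_trans (H _) _; last first.
  by rewrite (@iid_box _ mu a b hab).
move=> x; rewrite /boxf; case: ifP => [/forallP hx | _]; last exact: leey.
rewrite EFinM; apply: lee_wpmul2l; first by rewrite lee_fin invr_ge0 ler0n.
apply: le_trans (_ : \sum_(i < n) (`|kth_nn (fun j : 'I_n => x j) i k - x i|)%:E <= _).
  apply: lee_sum => i _; exact: int01.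
rewrite sumEFin lee_fin; exact: det_bound.
Qed.

End main.

Theorem theorem3 (R : realType) (mu : probability R R) (k : nat) :
  (0 < k)%N ->
  (forall a : R, mu [set a] = 0%E) ->
  compact (measure_support mu) ->
  smote_mean_error mu k n @[n --> \oo] --> 0%E.
Proof.
move=> k0 _ cS.
have [M hM] := @support_bounded _ _ cS.
pose a := (- `|M| - 1)%R; pose b := (`|M| + 1)%R.
have ab : (a < b)%R by rewrite /a /b; have := normr_ge0 M; lra.
have hab : mu (~` [set x | (a <= x <= b)%R]) = 0%E.
  have [N [mN N0 sN]] := @negl_compl_support _ mu.
  apply/eqP; rewrite eq_le measure_ge0 andbT -N0; apply: le_measure; rewrite ?inE.
  - exact: measurableC (mS _ a b).
  - exact: mN.
  move=> x /= hx; apply: sN => Sx; apply: hx.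
  have := hM x Sx; have := ler_norm M; rewrite ler_norml /a /b => h /andP [h1 h2].
  apply/andP; split; lra.
have e0 n : 0 <= smote_mean_error mu k n.
  by apply: iid_ge0 => x; exact: F_ge0.
have hb n m : (0 < n)%N -> (fine (smote_mean_error mu k n) <=
   ((n%:R)^-1 * (n%:R * ((b - a) / m.+1%:R) + (k * m.+1)%:R * (b - a))))%R.
  move=> n0; have := @smote_bound R mu k a b k0 ab hab n m n0.
  have := e0 n; case: (smote_mean_error mu k n) => //= r _; by rewrite lee_fin.
apply/fine_cvgP; split.
  exists 1%N => // n /= n1.
  rewrite ge0_fin_numE //; apply: le_lt_trans (@smote_bound R mu k a b k0 ab hab n 0 n1) _.
  exact: ltry.
apply/cvgrPdist_le => eps eps0.
pose m := Num.truncn (2 * (b - a) / eps)%R.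
pose K := ((k * m.+1)%:R * (b - a))%R.
pose N := (Num.truncn (2 * K / eps)%R).+1.
exists N => // n /= hn.
have n0 : (0 < n)%N by apply: leq_trans hn.
have nR : (0 < (n%:R : R))%R by rewrite ltr0n.
rewrite sub0r normrN ger0_norm; last exact: fine_ge0.
apply: le_trans (hb n m n0) _.
rewrite mulrDr (mulrA ((n%:R)^-1)%R) mulVf ?gt_eqF // mul1r.
have hm : ((b - a) / m.+1%:R <= eps / 2)%R.
  rewrite ler_pdivrMr ?ltr0n //.
  have := truncnS_gt (2 * (b - a) / eps)%R; rewrite ltr_pdivrMr //.
  rewrite -/m; nra.
have hK : ((n%:R)^-1 * K <= eps / 2)%R.
  rewrite mulrC ler_pdivrMr //.
  have := truncnS_gt (2 * K / eps)%R; rewrite ltr_pdivrMr // -/N.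
  have : ((N%:R : R) <= n%:R)%R by rewrite ler_nat.
  nra.
move: hK; rewrite /K => h2. rewrite [leRHS]splitr; exact: lerD hm h2.
Qed.
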